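(* If the semimetric space $(T,\rho_{2,T})$ is complete, then the semimetric space $(T\times[0,\infty),\rho_2)$ is complete.
   Context: $(U_1(t))_{t\in T}$ is a process with uniform $(0,1)$ margins such that the bivariate tail copulas $R_{s,t}(x,y)=\lim_{u\downarrow0}u^{-1}\mathbb{P}\{U_1(s)\le ux,U_1(t)\le uy\}$ exist for all $s,t\in T$, $x,y\ge0$. $\rho_{2,T}(s,t)=[2\{1-R_{s,t}(1,1)\}]^{1/2}$ on $T$ and $\rho_2((s,x),(t,y))=(x-2R_{s,t}(x,y)+y)^{1/2}$ on $T\times[0,\infty)$. *)

(* Defs.v *)
From Stdlib Require Import Reals Lra.
Open Scope R_scope.

Record prob_space (Omega : Type) : Type := {
  meas : (Omega -> Prop) -> Prop;
  meas_full : meas (fun _ => True);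
  meas_compl : forall A, meas A -> meas (fun w => ~ A w);
  meas_cunion : forall A : nat -> Omega -> Prop,
      (forall n, meas (A n)) -> meas (fun w => exists n, A n w);
  prob : (Omega -> Prop) -> R;
  prob_nonneg : forall A, meas A -> 0 <= prob A;
  prob_full : prob (fun _ => True) = 1;
  prob_sigma_add : forall A : nat -> Omega -> Prop,
      (forall n, meas (A n)) ->
      (forall n m w, n <> m -> A n w -> A m w -> False) ->
      infinite_sum (fun n => prob (A n)) (prob (fun w => exists n, A n w))
}.
Arguments meas {Omega}.
Arguments prob {Omega}.

Definition random_variable {Omega} (P : prob_space Omega) (X : Omega -> R) : Prop :=
  forall a : R, meas P (fun w => X w <= a).

Definition uniform_margins {Omega T} (P : prob_space Omega) (U : T -> Omega -> R) : Prop :=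
  forall t, random_variable P (U t) /\
    forall a, 0 <= a <= 1 -> prob P (fun w => U t w <= a) = a.

Definition is_tail_copula {Omega T} (P : prob_space Omega) (U : T -> Omega -> R)
    (Rc : T -> T -> R -> R -> R) : Prop :=
  forall s t x y, 0 <= x -> 0 <= y ->
    limit1_in (fun u => / u * prob P (fun w => U s w <= u * x /\ U t w <= u * y))
              (fun u => 0 < u) (Rc s t x y) 0.

Definition rho2T {T} (Rc : T -> T -> R -> R -> R) (s t : T) : R :=
  sqrt (2 * (1 - Rc s t 1 1)).

Definition rho2 {T} (Rc : T -> T -> R -> R -> R) (p q : T * R) : R :=
  sqrt (snd p - 2 * Rc (fst p) (fst q) (snd p) (snd q) + snd q).

Definition cauchy_seq {X} (d : X -> X -> R) (a : nat -> X) : Prop :=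
  forall eps, 0 < eps -> exists N, forall n m, (n >= N)%nat -> (m >= N)%nat -> d (a n) (a m) < eps.

Definition complete_on {X} (A : X -> Prop) (d : X -> X -> R) : Prop :=
  forall a : nat -> X, (forall n, A (a n)) -> cauchy_seq d a ->
    exists p, A p /\ Un_cv (fun n => d (a n) p) 0.

(* Main.v *)
Require Import Defs.
From Stdlib Require Import Reals Lra Lia FunctionalExtensionality PropExtensionality Classical.
Open Scope R_scope.

Lemma pred_ext {Om} (E F : Om -> Prop) : (forall w, E w <-> F w) -> E = F.
Proof. intro H; apply functional_extensionality; intro w; apply propositional_extensionality; auto. Qed.

Lemma prob_ext {Om} (P : prob_space Om) E F : (forall w, E w <-> F w) -> prob P E = prob P F.
Proof. intro H; rewrite (pred_ext E F H); reflexivity. Qed.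

Lemma meas_ext {Om} (P : prob_space Om) E F : (forall w, E w <-> F w) -> meas P E -> meas P F.
Proof. intro H; rewrite (pred_ext E F H); auto. Qed.

Lemma meas_empty {Om} (P : prob_space Om) : meas P (fun _ => False).
Proof. apply (meas_ext P (fun w => ~ True)); [tauto|]. apply meas_compl, meas_full. Qed.

Lemma meas_inter {Om} (P : prob_space Om) E F :
  meas P E -> meas P F -> meas P (fun w => E w /\ F w).
Proof.
  intros HE HF.
  set (G := fun n : nat => match n with O => fun w => ~ E w | _ => fun w => ~ F w end).
  assert (HG : forall n, meas P (G n)) by (intros [|n]; simpl; apply meas_compl; auto).
  pose proof (meas_compl _ P _ (meas_cunion _ P G HG)) as H.
  revert H; apply meas_ext.
  intro w; split.
  - intro Hn; split; apply NNPP; intro Hc; apply Hn; [exists 0%nat | exists 1%nat]; exact Hc.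
  - intros [HEw HFw] [[|n] Hn]; simpl in Hn; auto.
Qed.

Lemma meas_not {Om} (P : prob_space Om) E : meas P E -> meas P (fun w => ~ E w).
Proof. apply meas_compl. Qed.

Lemma prob_empty {Om} (P : prob_space Om) : prob P (fun _ => False) = 0.
Proof.
  pose proof (prob_sigma_add _ P (fun _ => fun _ => False) (fun _ => meas_empty P)
     (fun n m w _ H _ => H)) as H.
  rewrite (prob_ext P _ (fun _ => False)) in H by (intro w; split; [intros [_ []]|tauto]).
  set (c := prob P (fun _ => False)) in *.
  assert (Hc : 0 <= c) by apply prob_nonneg, meas_empty.
  destruct (Rle_lt_or_eq_dec 0 c Hc) as [Hlt|]; [|auto].
  destruct (H (c/4)) as [N HN]; [lra|].
  pose proof (HN N (le_n _)) as H1. pose proof (HN (S N) (le_S _ _ (le_n _))) as H2.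
  simpl in H2. unfold Rdist in *. revert H1 H2. generalize (sum_f_R0 (fun _ => c) N).
  intros s H1 H2. exfalso. unfold Rabs in *; repeat destruct Rcase_abs; lra.
Qed.

Lemma prob_add2 {Om} (P : prob_space Om) E F : meas P E -> meas P F ->
  (forall w, E w -> F w -> False) ->
  prob P (fun w => E w \/ F w) = prob P E + prob P F.
Proof.
  intros HE HF Hd.
  set (A := fun n : nat => match n with O => E | 1%nat => F | _ => fun _ => False end).
  assert (HA : forall n, meas P (A n)) by (intros [|[|n]]; simpl; auto using meas_empty).
  assert (HD : forall n m w, n <> m -> A n w -> A m w -> False).
  { intros n m w Hnm; destruct n as [|[|n]]; destruct m as [|[|m]]; simpl;
    first [ tauto | exfalso; apply Hnm; reflexivity | intros; eapply Hd; eauto ]. }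
  pose proof (prob_sigma_add _ P A HA HD) as H.
  rewrite (prob_ext P _ (fun w => E w \/ F w)) in H.
  2:{ intro w; split. intros [[|[|n]] Hn]; simpl in Hn; tauto.
      intros [h|h]; [exists 0%nat|exists 1%nat]; exact h. }
  apply (uniqueness_sum _ _ _ H).
  intros eps Heps; exists 1%nat; intros n Hn.
  assert (Hs : forall k, sum_f_R0 (fun n => prob P (A n)) (S k) = prob P E + prob P F).
  { induction k. simpl; ring. simpl in *. rewrite IHk, prob_empty; ring. }
  destruct n as [|n]; [lia|]. rewrite Hs. unfold Rdist. rewrite Rminus_diag, Rabs_R0; lra.
Qed.

Lemma prob_mono {Om} (P : prob_space Om) E F : meas P E -> meas P F ->
  (forall w, E w -> F w) -> prob P E <= prob P F.
Proof.
  intros HE HF H.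
  rewrite (prob_ext P F (fun w => E w \/ (F w /\ ~ E w))).
  2:{ intro w; split; [|firstorder]. intro; destruct (classic (E w)); tauto. }
  rewrite prob_add2; auto using meas_inter, meas_not.
  2: tauto.
  pose proof (prob_nonneg _ P _ (meas_inter P _ _ HF (meas_not P _ HE))); lra.
Qed.

Lemma prob_key {Om} (P : prob_space Om) A B C : meas P A -> meas P B -> meas P C ->
  prob P (fun w => A w /\ B w) + prob P (fun w => B w /\ C w)
  <= prob P B + prob P (fun w => A w /\ C w).
Proof.
  intros HA HB HC.
  rewrite (prob_ext P (fun w => A w /\ B w)
     (fun w => (A w /\ B w /\ C w) \/ (A w /\ B w /\ ~ C w))).
  2:{ intro w; split; [|tauto]. intro; destruct (classic (C w)); tauto. }
  rewrite prob_add2; [|auto using meas_inter, meas_not|auto using meas_inter, meas_not|tauto].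
  assert (H1 : prob P (fun w => A w /\ B w /\ C w) <= prob P (fun w => A w /\ C w))
    by (apply prob_mono; [auto using meas_inter|auto using meas_inter|tauto]).
  assert (H2 : prob P (fun w => (A w /\ B w /\ ~ C w) \/ (B w /\ C w)) <= prob P B)
    by (apply prob_mono; [ apply meas_ext with (fun w => ~ ((~ (A w /\ B w /\ ~ C w)) /\ ~ (B w /\ C w)));
        [intro; split; [|tauto]; intro; apply NNPP; tauto|];
        auto 10 using meas_inter, meas_not | auto | tauto ]).
  rewrite prob_add2 in H2; auto using meas_inter, meas_not; [lra|tauto].
Qed.

Lemma lim_le f g Lf Lg d : 0 < d -> (forall u, 0 < u < d -> f u <= g u) ->
  limit1_in f (fun u => 0 < u) Lf 0 -> limit1_in g (fun u => 0 < u) Lg 0 -> Lf <= Lg.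
Proof.
  intros Hd H Hf Hg. destruct (Rle_or_lt Lf Lg) as [|Hlt]; [auto|exfalso].
  destruct (Hf ((Lf - Lg)/2)) as [a1 [Ha1 H1]]; [lra|].
  destruct (Hg ((Lf - Lg)/2)) as [a2 [Ha2 H2]]; [lra|].
  set (u := Rmin d (Rmin a1 a2) / 2).
  assert (Hu0 : 0 < u) by (unfold u; repeat apply Rmin_case; lra).
  assert (Hu1 : u < d) by (unfold u; pose proof (Rmin_l d (Rmin a1 a2)); lra).
  assert (Hu2 : u < a1) by (unfold u; pose proof (Rmin_r d (Rmin a1 a2)); pose proof (Rmin_l a1 a2); lra).
  assert (Hu3 : u < a2) by (unfold u; pose proof (Rmin_r d (Rmin a1 a2)); pose proof (Rmin_r a1 a2); lra).
  specialize (H1 u). specialize (H2 u). simpl in H1, H2. unfold Rdist in *.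
  rewrite Rminus_0_r, Rabs_right in H1, H2 by lra.
  specialize (H1 (conj Hu0 Hu2)). specialize (H2 (conj Hu0 Hu3)).
  specialize (H u (conj Hu0 Hu1)).
  revert H1 H2; unfold Rabs; repeat destruct Rcase_abs; lra.
Qed.

Lemma lim_const c D x0 : limit1_in (fun _ => c) D c x0.
Proof.
  intros eps Heps; exists 1; split; [lra|]. intros x _; simpl; unfold Rdist.
  rewrite Rminus_diag, Rabs_R0; lra.
Qed.

Lemma lim_unique f L1 L2 : limit1_in f (fun u => 0 < u) L1 0 ->
  limit1_in f (fun u => 0 < u) L2 0 -> L1 = L2.
Proof.
  intros H1 H2. apply Rle_antisym; apply (lim_le f f _ _ 1); auto; intros; lra.
Qed.

Definition ev {Om T} (U : T -> Om -> R) s t x y u :=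
  fun w => U s w <= u * x /\ U t w <= u * y.

Definition qf {Om T} (P : prob_space Om) (U : T -> Om -> R) s t x y :=
  fun u => / u * prob P (fun w => U s w <= u * x /\ U t w <= u * y).

Lemma small_u x u : 0 <= x -> 0 < u < / (x + 1) -> 0 <= u * x <= 1.
Proof.
  intros Hx [Hu1 Hu2]. split; [nra|].
  apply (Rmult_lt_compat_r (x+1)) in Hu2; [|lra].
  rewrite Rinv_l in Hu2 by lra. nra.
Qed.

Lemma inv_pos x : 0 <= x -> 0 < / (x + 1).
Proof. intros; apply Rinv_0_lt_compat; lra. Qed.

Lemma meas_ev {Om T} (P : prob_space Om) (U : T -> Om -> R) s t x y u :
  uniform_margins P U -> meas P (ev U s t x y u).
Proof. intros HU; apply meas_inter; apply HU. Qed.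

Lemma R_nonneg {Om T} (P : prob_space Om) U Rc (s t : T) x y :
  uniform_margins P U -> is_tail_copula P U Rc -> 0 <= x -> 0 <= y -> 0 <= Rc s t x y.
Proof.
  intros HU HR Hx Hy. apply (lim_le (fun _ => 0) (qf P U s t x y) _ _ 1); [lra| |apply lim_const|apply HR; auto].
  intros u Hu. unfold qf. apply Rmult_le_pos; [left; apply Rinv_0_lt_compat; lra|].
  apply prob_nonneg, (meas_ev P U s t x y u HU).
Qed.

Lemma R_le_x {Om T} (P : prob_space Om) U Rc (s t : T) x y :
  uniform_margins P U -> is_tail_copula P U Rc -> 0 <= x -> 0 <= y -> Rc s t x y <= x.
Proof.
  intros HU HR Hx Hy. apply (lim_le (qf P U s t x y) (fun _ => x) _ _ (/(x+1))); [apply inv_pos; auto| |apply HR; auto|apply lim_const].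
  intros u Hu. pose proof (small_u x u Hx Hu). unfold qf.
  apply Rle_trans with (/ u * prob P (fun w => U s w <= u * x)).
  - apply Rmult_le_compat_l; [left; apply Rinv_0_lt_compat; lra|].
    apply prob_mono; [apply (meas_ev P U s t x y u HU)|apply HU|tauto].
  - rewrite (proj2 (HU s)) by auto. field_simplify; lra.
Qed.

Lemma R_le_y {Om T} (P : prob_space Om) U Rc (s t : T) x y :
  uniform_margins P U -> is_tail_copula P U Rc -> 0 <= x -> 0 <= y -> Rc s t x y <= y.
Proof.
  intros HU HR Hx Hy. apply (lim_le (qf P U s t x y) (fun _ => y) _ _ (/(y+1))); [apply inv_pos; auto| |apply HR; auto|apply lim_const].
  intros u Hu. pose proof (small_u y u Hy Hu). unfold qf.
  apply Rle_trans with (/ u * prob P (fun w => U t w <= u * y)).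
  - apply Rmult_le_compat_l; [left; apply Rinv_0_lt_compat; lra|].
    apply prob_mono; [apply (meas_ev P U s t x y u HU)|apply HU|tauto].
  - rewrite (proj2 (HU t)) by auto. field_simplify; lra.
Qed.

Lemma R_diag {Om T} (P : prob_space Om) U Rc (s : T) x y :
  uniform_margins P U -> is_tail_copula P U Rc -> 0 <= x -> 0 <= y -> Rc s s x y = Rmin x y.
Proof.
  intros HU HR Hx Hy. set (m := Rmin x y).
  assert (Hm : 0 <= m) by (unfold m; apply Rmin_case; auto).
  assert (Heq : forall u, 0 < u < / (m + 1) ->
     / u * prob P (fun w => U s w <= u * x /\ U s w <= u * y) = m).
  { intros u Hu. pose proof (small_u m u Hm Hu).
    rewrite (prob_ext P _ (fun w => U s w <= u * m)).
    - rewrite (proj2 (HU s)) by auto. field; lra.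
    - intro w. unfold m; apply Rmin_case_strong; intros; split; try tauto;
      intro; split; auto; eapply Rle_trans; eauto; apply Rmult_le_compat_l; lra. }
  apply Rle_antisym.
  - apply (lim_le (qf P U s s x y) (fun _ => m) _ _ (/(m+1))); [apply inv_pos; auto| |apply HR; auto|apply lim_const].
    intros; unfold qf; rewrite Heq; auto; lra.
  - apply (lim_le (fun _ => m) (qf P U s s x y) _ _ (/(m+1))); [apply inv_pos; auto| |apply lim_const|apply HR; auto].
    intros; unfold qf; rewrite Heq; auto; lra.
Qed.

Lemma R_hom {Om T} (P : prob_space Om) U Rc (s t : T) x y c :
  uniform_margins P U -> is_tail_copula P U Rc -> 0 <= x -> 0 <= y -> 0 < c ->
  Rc s t (c * x) (c * y) = c * Rc s t x y.
Proof.
  intros HU HR Hx Hy Hc.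
  apply (lim_unique (fun u => / u * prob P (fun w => U s w <= u * (c * x) /\ U t w <= u * (c * y)))).
  - apply HR; nra.
  - intros eps Heps. destruct (HR s t x y Hx Hy (eps / c)) as [a [Ha H]].
    { apply Rdiv_lt_0_compat; lra. }
    exists (a / c); split; [apply Rdiv_lt_0_compat; lra|].
    intros u [Hu Hd]. specialize (H (c * u)). simpl in H, Hd |- *. unfold Rdist in *.
    rewrite Rminus_0_r, Rabs_right in Hd by lra. rewrite Rminus_0_r, Rabs_right in H by nra.
    assert (Hlt : c * u < a) by (apply (Rmult_lt_compat_l c) in Hd; [|lra];
       replace (c * (a / c)) with a in Hd by (field; lra); lra).
    specialize (H (conj (Rmult_lt_0_compat c u Hc Hu) Hlt)).
    replace (/ u * prob P (fun w => U s w <= u * (c * x) /\ U t w <= u * (c * y)) - c * Rc s t x y)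
      with (c * (/ (c * u) * prob P (fun w => U s w <= c * u * x /\ U t w <= c * u * y) - Rc s t x y)).
    + rewrite Rabs_mult, Rabs_right by lra.
      apply (Rmult_lt_compat_l c) in H; [|lra]. replace (c * (eps / c)) with eps in H by (field; lra). lra.
    + rewrite (prob_ext P (fun w => U s w <= c * u * x /\ U t w <= c * u * y)
         (fun w => U s w <= u * (c * x) /\ U t w <= u * (c * y))).
      * field; lra.
      * intro w; replace (c * u * x) with (u * (c * x)) by ring; replace (c * u * y) with (u * (c * y)) by ring; tauto.
Qed.

Lemma R_tri {Om T} (P : prob_space Om) U Rc (s t r : T) x y z :
  uniform_margins P U -> is_tail_copula P U Rc -> 0 <= x -> 0 <= y -> 0 <= z ->
  Rc s t x y + Rc t r y z <= y + Rc s r x z.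
Proof.
  intros HU HR Hx Hy Hz.
  apply (lim_le (fun u => / u * prob P (fun w => U s w <= u * x /\ U t w <= u * y) +
                          / u * prob P (fun w => U t w <= u * y /\ U r w <= u * z))
                (fun u => y + / u * prob P (fun w => U s w <= u * x /\ U r w <= u * z))
                _ _ (/(y+1))); [apply inv_pos; auto| | apply limit_plus; apply HR; auto
                 | apply limit_plus; [apply lim_const | apply HR; auto]].
  intros u Hu. pose proof (small_u y u Hy Hu).
  replace y with (/ u * prob P (fun w => U t w <= u * y)) at 1
    by (rewrite (proj2 (HU t)) by auto; field; lra).
  rewrite <- !Rmult_plus_distr_l. apply Rmult_le_compat_l; [left; apply Rinv_0_lt_compat; lra|].
  apply prob_key; apply HU.
Qed.

Definition Dd {T} (Rc : T -> T -> R -> R -> R) (p q : T * R) : R :=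
  snd p - 2 * Rc (fst p) (fst q) (snd p) (snd q) + snd q.

Lemma sqrt_cv (d : nat -> R) : (forall n, 0 <= d n) -> Un_cv d 0 -> Un_cv (fun n => sqrt (d n)) 0.
Proof.
  intros H0 H eps Heps. destruct (H (eps * eps)) as [N HN]; [nra|]. exists N; intros n Hn.
  specialize (HN n Hn). unfold Rdist in *. rewrite Rminus_0_r, Rabs_right in * by (auto using Rle_ge, sqrt_pos).
  rewrite <- (sqrt_square eps) by lra. apply sqrt_lt_1; auto; nra.
Qed.

Lemma cv_of_sqrt (d : nat -> R) : (forall n, 0 <= d n) -> Un_cv (fun n => sqrt (d n)) 0 -> Un_cv d 0.
Proof.
  intros H0 H eps Heps. destruct (H (sqrt eps)) as [N HN]; [apply sqrt_lt_R0; lra|]. exists N; intros n Hn.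
  specialize (HN n Hn). unfold Rdist in *. rewrite Rminus_0_r, Rabs_right in * by (auto using Rle_ge, sqrt_pos).
  apply sqrt_lt_0_alt; auto.
Qed.


Lemma D_abs {Om T} (P : prob_space Om) U Rc (p q : T * R) :
  uniform_margins P U -> is_tail_copula P U Rc -> 0 <= snd p -> 0 <= snd q ->
  Rabs (snd p - snd q) <= Dd Rc p q.
Proof.
  intros HU HR Hp Hq. unfold Dd.
  pose proof (R_le_x P U Rc (fst p) (fst q) _ _ HU HR Hp Hq).
  pose proof (R_le_y P U Rc (fst p) (fst q) _ _ HU HR Hp Hq).
  unfold Rabs; destruct Rcase_abs; lra.
Qed.

Lemma D_nonneg {Om T} (P : prob_space Om) U Rc (p q : T * R) :
  uniform_margins P U -> is_tail_copula P U Rc -> 0 <= snd p -> 0 <= snd q ->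
  0 <= Dd Rc p q.
Proof.
  intros HU HR Hp Hq. eapply Rle_trans; [apply Rabs_pos|apply (D_abs P U Rc); auto].
Qed.

Lemma D_tri {Om T} (P : prob_space Om) U Rc (p q r : T * R) :
  uniform_margins P U -> is_tail_copula P U Rc -> 0 <= snd p -> 0 <= snd q -> 0 <= snd r ->
  Dd Rc p r <= Dd Rc p q + Dd Rc q r.
Proof.
  intros HU HR Hp Hq Hr. unfold Dd.
  pose proof (R_tri P U Rc (fst p) (fst q) (fst r) _ _ _ HU HR Hp Hq Hr). lra.
Qed.

Lemma D_diag {Om T} (P : prob_space Om) U Rc (p q : T * R) :
  uniform_margins P U -> is_tail_copula P U Rc -> 0 <= snd p -> 0 <= snd q -> fst p = fst q ->
  Dd Rc p q = Rabs (snd p - snd q).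
Proof.
  intros HU HR Hp Hq He. unfold Dd. rewrite He, (R_diag P U Rc (fst q) _ _ HU HR Hp Hq).
  unfold Rabs; apply Rmin_case_strong; intros; destruct Rcase_abs; lra.
Qed.

Lemma D_hom {Om T} (P : prob_space Om) U Rc (p q : T * R) c :
  uniform_margins P U -> is_tail_copula P U Rc -> 0 < c -> snd p = c -> snd q = c ->
  Dd Rc p q = c * Dd Rc (fst p, 1) (fst q, 1).
Proof.
  intros HU HR Hc Hp Hq. unfold Dd; simpl. rewrite Hp, Hq.
  replace c with (c * 1) at 2 3 by ring.
  rewrite (R_hom P U Rc (fst p) (fst q) 1 1 c HU HR) by lra. ring.
Qed.

Lemma D_zero {Om T} (P : prob_space Om) U Rc (p q : T * R) :
  uniform_margins P U -> is_tail_copula P U Rc -> 0 <= snd p -> snd q = 0 ->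
  Dd Rc p q = snd p.
Proof.
  intros HU HR Hp Hq. unfold Dd. rewrite Hq.
  pose proof (R_le_y P U Rc (fst p) (fst q) (snd p) 0 HU HR Hp (Rle_refl 0)).
  pose proof (R_nonneg P U Rc (fst p) (fst q) (snd p) 0 HU HR Hp (Rle_refl 0)). lra.
Qed.

Lemma rho2T_D {T} (Rc : T -> T -> R -> R -> R) s t : rho2T Rc s t = sqrt (Dd Rc (s, 1) (t, 1)).
Proof. unfold rho2T, Dd; simpl. f_equal; ring. Qed.

Theorem lemmaA9 (Omega T : Type) (P : prob_space Omega) (U : T -> Omega -> R)
    (Rc : T -> T -> R -> R -> R) :
  uniform_margins P U ->
  is_tail_copula P U Rc ->
  complete_on (fun _ : T => True) (rho2T Rc) ->
  complete_on (fun p : T * R => 0 <= snd p) (rho2 Rc).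
Proof.
  intros HU HR HT a Ha Hc.
  assert (HcD : forall eps, 0 < eps -> exists N, forall n m, (n >= N)%nat -> (m >= N)%nat ->
            Dd Rc (a n) (a m) < eps).
  { intros eps Heps. destruct (Hc (sqrt eps)) as [N HN]; [apply sqrt_lt_R0; lra|].
    exists N; intros n m Hn Hm. apply sqrt_lt_0_alt, HN; auto. }
  assert (Hcx : Cauchy_crit (fun n => snd (a n))).
  { intros eps Heps. destruct (HcD eps Heps) as [N HN]. exists N; intros n m Hn Hm.
    unfold Rdist. eapply Rle_lt_trans; [apply (D_abs P U Rc); auto|]. apply HN; auto. }
  destruct (R_complete _ Hcx) as [xl Hxl].
  assert (Hxl0 : 0 <= xl).
  { destruct (Rle_or_lt 0 xl) as [|Hn]; auto. destruct (Hxl (- xl)) as [N HN]; [lra|].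
    specialize (HN N (le_n _)). specialize (Ha N). unfold Rdist, Rabs in HN.
    destruct Rcase_abs; lra. }
  destruct (Rle_lt_or_eq_dec 0 xl Hxl0) as [Hpos|Hz].
  2:{ exists (fst (a 0%nat), 0). split; [simpl; lra|].
      unfold rho2. apply sqrt_cv.
      - intro n. apply (D_nonneg P U Rc); simpl; auto; lra.
      - intros eps Heps. destruct (Hxl eps Heps) as [N HN]. exists N; intros n Hn.
        fold (Dd Rc (a n) (fst (a 0%nat), 0)).
        rewrite (D_zero P U Rc) by (simpl; auto). subst xl. apply HN; auto. }
  set (s := fun n => fst (a n)).
  assert (Hq : forall n, 0 <= snd (s n, xl)) by (intros; simpl; lra).
  assert (Hsc : cauchy_seq (rho2T Rc) s).
  { intros eps Heps.
    set (e := eps * eps * xl / 3).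
    assert (He : 0 < e) by (unfold e; apply Rdiv_lt_0_compat; [|lra]; apply Rmult_lt_0_compat; nra).
    destruct (HcD e He) as [N1 HN1]. destruct (Hxl e He) as [N2 HN2].
    exists (N1 + N2)%nat. intros n m Hn Hm.
    rewrite rho2T_D, <- (sqrt_square eps) by lra.
    assert (H1 : Dd Rc (s n, xl) (s m, xl) <= Dd Rc (s n, xl) (a n) + Dd Rc (a n) (a m) + Dd Rc (a m) (s m, xl)).
    { eapply Rle_trans; [apply (D_tri P U Rc _ (a n)); auto|].
      pose proof (D_tri P U Rc (a n) (a m) (s m, xl) HU HR (Ha n) (Ha m) (Hq m)). lra. }
    rewrite (D_hom P U Rc (s n, xl) (s m, xl) xl) in H1 by auto. simpl in H1.
    rewrite (D_diag P U Rc (s n, xl) (a n)) in H1 by (simpl; auto).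
    rewrite (D_diag P U Rc (a m) (s m, xl)) in H1 by (simpl; auto).
    simpl in H1.
    pose proof (HN1 n m ltac:(lia) ltac:(lia)). pose proof (HN2 n ltac:(lia)). pose proof (HN2 m ltac:(lia)).
    unfold Rdist in *. rewrite Rabs_minus_sym in H0.
    apply sqrt_lt_1; [apply (D_nonneg P U Rc); auto; simpl; lra|nra|].
    apply (Rmult_lt_reg_l xl); auto. unfold e in *. fold (s n) in *. nra. }
  destruct (HT s (fun _ => I) Hsc) as [sl [_ Hsl]].
  assert (Hsl2 : Un_cv (fun n => Dd Rc (s n, 1) (sl, 1)) 0).
  { apply cv_of_sqrt.
    - intro n. apply (D_nonneg P U Rc); simpl; auto; lra.
    - intros eps Heps. destruct (Hsl eps Heps) as [N HN]; exists N; intros n Hn.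
      rewrite <- rho2T_D; apply HN; auto. }
  exists (sl, xl). split; [simpl; lra|]. unfold rho2. apply sqrt_cv.
  - intro n. apply (D_nonneg P U Rc); simpl; auto; lra.
  - intros eps Heps. fold (Dd Rc).
    destruct (Hxl (eps / 2)) as [N1 HN1]; [lra|].
    destruct (Hsl2 (eps / (2 * xl))) as [N2 HN2]; [apply Rdiv_lt_0_compat; lra|].
    exists (N1 + N2)%nat; intros n Hn.
    assert (H1 : Dd Rc (a n) (sl, xl) <= Dd Rc (a n) (s n, xl) + Dd Rc (s n, xl) (sl, xl))
      by (apply (D_tri P U Rc); simpl; auto; lra).
    rewrite (D_hom P U Rc (s n, xl) (sl, xl) xl) in H1 by auto. simpl in H1.
    rewrite (D_diag P U Rc (a n) (s n, xl)) in H1 by (simpl; auto).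
    simpl in H1.
    pose proof (HN1 n ltac:(lia)) as HA1. pose proof (HN2 n ltac:(lia)) as H2.
    assert (Hnn : 0 <= Dd Rc (a n) (sl, xl))
      by (apply (D_nonneg P U Rc); simpl; auto; lra).
    assert (H3 : xl * Dd Rc (s n, 1) (sl, 1) < eps / 2).
    { unfold Rdist in H2. rewrite Rminus_0_r in H2.
      pose proof (Rle_abs (Dd Rc (s n, 1) (sl, 1))).
      apply (Rmult_lt_compat_l xl) in H2; auto.
      replace (xl * (eps / (2 * xl))) with (eps / 2) in H2 by (field; lra). nra. }
    unfold Rdist in *. fold (Dd Rc (a n) (sl, xl)). rewrite Rminus_0_r, Rabs_right by lra. lra.
Qed.
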